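(* Let $(\mathcal{K},[\cdot,\cdot])$ be a Krein space with fundamental symmetry $J$, and let $\{k_n\}_{n\in\mathbb{N}}$ be a sequence in $\mathcal{K}$. Let $0<A\leq B<\infty$. The following statements are equivalent: (i) $\{k_n\}_{n\in\mathbb{N}}$ is a frame for the Krein space $\mathcal{K}$ with frame bounds $A\leq B$; (ii) $\{Jk_n\}_{n\in\mathbb{N}}$ is a frame for the Krein space $\mathcal{K}$ with frame bounds $A\leq B$; (iii) $\{k_n\}_{n\in\mathbb{N}}$ is a frame for the Hilbert space $(\mathcal{K},[\cdot,\cdot]_J)$ with frame bounds $A\leq B$; (iv) $\{Jk_n\}_{n\in\mathbb{N}}$ is a frame for the Hilbert space $(\mathcal{K},[\cdot,\cdot]_J)$ with frame bounds $A\leq B$.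
   Context: A Krein space $(\mathcal{K},[\cdot,\cdot])$ has a fundamental decomposition $\mathcal{K}=\mathcal{K}_+\oplus\mathcal{K}_-$ and fundamental symmetry $J(k^++k^-)=k^+-k^-$ ($k^\pm\in\mathcal{K}_\pm$), such that $[h,k]_J:=[h,Jk]$ is a positive definite inner product making $(\mathcal{K},[\cdot,\cdot]_J)$ a Hilbert space; $\|k\|_J:=\sqrt{[k,k]_J}$. A countable sequence $\{k_n\}$ in a Krein space $\mathcal{K}$ is a frame for the Krein space $\mathcal{K}$ with frame bounds $0<A\leq B<\infty$ if $A\|k\|_J^2\leq\sum_n|[k_n,k]|^2\leq B\|k\|_J^2$ for all $k\in\mathcal{K}$. A frame for a Hilbert space $(\mathcal{H},\langle\cdot,\cdot\rangle)$ with frame bounds $A\le B$ is a sequence $\{f_n\}$ with $A\|f\|^2\leq\sum_n|\langle f_n,f\rangle|^2\leq B\|f\|^2$ for all $f\in\mathcal{H}$. *)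

(* Defs.v *)
From HB Require Import structures.
From mathcomp Require Import all_boot all_order all_algebra.
From mathcomp Require Import all_classical all_reals all_analysis.
From mathcomp Require Import complex.
Set Implicit Arguments. Unset Strict Implicit. Unset Printing Implicit Defensive.
Import Order.TTheory GRing.Theory Num.Theory.
Local Open Scope ring_scope.

Section Krein.
Variable R : realType.
Local Notation C := R[i].
Variable V : lmodType C.

Definition sesquilinear_hermitian (ip : V -> V -> C) : Prop :=
  (forall (a : C) (x y z : V), ip (a *: x + y) z = a * ip x z + ip y z) /\
  (forall x y : V, ip x y = (ip y x)^*).

Definition subspace (S : pred V) : Prop :=
  0 \in S /\ forall (a : C) (x y : V), x \in S -> y \in S -> a *: x + y \in S.

Definition ipJ (ip : V -> V -> C) (J : V -> V) : V -> V -> C :=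
  fun h k => ip h (J k).

Definition hnorm (ipf : V -> V -> C) (x : V) : R :=
  Num.sqrt (complex.Re (ipf x x)).

Definition complete_wrt (nrm : V -> R) : Prop :=
  forall u : nat -> V,
    (forall e : R, 0 < e -> exists N : nat, forall m n : nat,
        (N <= m)%N -> (N <= n)%N -> nrm (u m - u n) < e) ->
    exists x : V, forall e : R, 0 < e -> exists N : nat, forall n : nat,
        (N <= n)%N -> nrm (u n - x) < e.

Definition krein_space (ip : V -> V -> C) (Kp Km : pred V) (J : V -> V) : Prop :=
  [/\ sesquilinear_hermitian ip,
      subspace Kp /\ subspace Km,
      (forall k : V, exists kp km, [/\ kp \in Kp, km \in Km & k = kp + km]) /\
      (forall x : V, x \in Kp -> x \in Km -> x = 0),
      (forall x y : V, x \in Kp -> y \in Km -> ip x y = 0) /\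
      (forall kp km : V, kp \in Kp -> km \in Km -> J (kp + km) = kp - km)
    & (forall k : V, k != 0 -> 0 < ipJ ip J k k) /\
      complete_wrt (hnorm (ipJ ip J))].

Definition frame_ineq (ipf : V -> V -> C) (nrm : V -> R) (k : nat -> V) (A B : R)
  : Prop :=
  forall x : V,
    ((A * nrm x ^+ 2)%:E <=
       \sum_(0 <= n <oo) ((Normc.normc (ipf (k n) x)) ^+ 2)%:E <=
     (B * nrm x ^+ 2)%:E)%E.

Definition krein_frame ip J k A B := frame_ineq ip (hnorm (ipJ ip J)) k A B.

Definition hilbert_frame ip J k A B :=
  frame_ineq (ipJ ip J) (hnorm (ipJ ip J)) k A B.

End Krein.

(* Main.v *)
Require Import Defs.
From HB Require Import structures.
From mathcomp Require Import all_boot all_order all_algebra.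
From mathcomp Require Import all_classical all_reals all_analysis.
From mathcomp Require Import complex.
Import Order.TTheory GRing.Theory Num.Theory.
Local Open Scope ring_scope.

Section Helpers.
Variables (R : realType) (V : lmodType R[i]) (ip : V -> V -> R[i]).
Hypothesis H : sesquilinear_hermitian ip.

Lemma ipD1 x y z : ip (x + y) z = ip x z + ip y z.
Proof. by have := (H.1 1 x y z); rewrite scale1r mul1r. Qed.

Lemma ip0l z : ip 0 z = 0.
Proof.
have e := ipD1 0 0 z; rewrite addr0 in e.
by apply: (addrI (ip 0 z)); rewrite addr0 -e.
Qed.

Lemma ipN1 x z : ip (- x) z = - ip x z.
Proof.
have := (H.1 (-1) x 0 z); rewrite addr0 ip0l addr0 scaleN1r => ->.
by rewrite mulN1r.
Qed.

Lemma ipD2 x y z : ip z (x + y) = ip z x + ip z y.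
Proof. by rewrite [LHS]H.2 [ip z x]H.2 [ip z y]H.2 ipD1 rmorphD. Qed.

Lemma ipN2 x z : ip z (- x) = - ip z x.
Proof. by rewrite [LHS]H.2 [ip z x]H.2 ipN1 rmorphN. Qed.
End Helpers.

Section Main.
Variables (R : realType) (V : lmodType R[i])
  (ip : V -> V -> R[i]) (Kp Km : pred V) (J : V -> V).
Hypothesis HK : krein_space ip Kp Km J.

Lemma Jdecomp x : exists kp km, [/\ kp \in Kp, km \in Km, x = kp + km &
  J x = kp - km].
Proof.
case: HK => _ [_ _] [Hd _] [_ HJ] _.
have [kp [km [a b ->]]] := Hd x.
by exists kp, km; split => //; rewrite HJ.
Qed.

Lemma JJ x : J (J x) = x.
Proof.
case: HK => _ [_ [Hm0 Hm]] _ [_ HJ] _.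
have [kp [km [a b -> ->]]] := Jdecomp x.
have nb : - km \in Km.
  by have := Hm (-1) km 0 b Hm0; rewrite addr0 scaleN1r.
by rewrite HJ // opprK.
Qed.

Lemma Jadj a b : ip (J a) b = ip a (J b).
Proof.
case: HK => Hs _ _ [Ho _] _.
have Ho' : forall x y, x \in Km -> y \in Kp -> ip x y = 0.
  by move=> x y hx hy; rewrite Hs.2 Ho // rmorph0.
have [ap [am [ha1 ha2 -> ->]]] := Jdecomp a.
have [bp [bm [hb1 hb2 -> ->]]] := Jdecomp b.
rewrite !(@ipD1 _ _ _ Hs, @ipN1 _ _ _ Hs, @ipD2 _ _ _ Hs, @ipN2 _ _ _ Hs).
rewrite (Ho ap bm) // (Ho' am bp) //.
by rewrite !(oppr0, addr0, add0r).
Qed.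

Lemma hnormJ x : hnorm (ipJ ip J) (J x) = hnorm (ipJ ip J) x.
Proof. by rewrite /hnorm /ipJ JJ Jadj. Qed.

Lemma frame_transfer (f g : V -> V -> R[i]) (k k' : nat -> V) A B :
  frame_ineq f (hnorm (ipJ ip J)) k A B ->
  (forall x, exists y, hnorm (ipJ ip J) y = hnorm (ipJ ip J) x /\
     forall n, g (k' n) x = f (k n) y) ->
  frame_ineq g (hnorm (ipJ ip J)) k' A B.
Proof.
move=> F E x; have [y [ny e]] := E x.
have -> : (fun m => (\sum_(0 <= n < m) ((Normc.normc (g (k' n) x)) ^+ 2)%:E)%E) =
          (fun m => (\sum_(0 <= n < m) ((Normc.normc (f (k n) y)) ^+ 2)%:E)%E).
  by apply: funext => m; apply: eq_bigr => n _; rewrite e.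
by rewrite -ny; apply: F.
Qed.

End Main.
Arguments JJ {R V ip Kp Km J} HK x.
Arguments Jadj {R V ip Kp Km J} HK a b.
Arguments hnormJ {R V ip Kp Km J} HK x.
Arguments frame_transfer {R V ip J f g k k' A B}.

Theorem theorem3p3 (R : realType) (V : lmodType R[i])
  (ip : V -> V -> R[i]) (Kp Km : pred V) (J : V -> V)
  (k : nat -> V) (A B : R) :
  krein_space ip Kp Km J -> 0 < A -> A <= B ->
  [<-> krein_frame ip J k A B;
       krein_frame ip J (fun n => J (k n)) A B;
       hilbert_frame ip J k A B;
       hilbert_frame ip J (fun n => J (k n)) A B].
Proof.
move=> HK _ _.
rewrite /krein_frame /hilbert_frame.
tfae => F; apply: (frame_transfer F) => x.
- exists (J x); split; first exact: (hnormJ HK).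
  by move=> n; rewrite /ipJ (Jadj HK).
- exists x; split => // n; by rewrite /ipJ (Jadj HK).
- exists (J x); split; first exact: (hnormJ HK).
  by move=> n; rewrite /ipJ (Jadj HK) !(JJ HK).
- exists x; split => // n; by rewrite /ipJ (Jadj HK) (JJ HK).
Qed.
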